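(* For $p\in[0,1]$ let $G_p$ be the $\{0,1\}$-Bernoulli distribution with $G_p(\{0\})=p$, $G_p(\{1\})=1-p$, and let $\Lambda^p$ and $\Lambda^p_{dir}$ be the time constants of the undirected model and of the directed model with horizontal weight law $G_p$. Then for every $v\ge0$, $\lim_{p\to0}\Lambda^p(v)=\Lambda^0(v)=v+1$, and likewise $\lim_{p\to0}\Lambda^p_{dir}(v)=v+1$.
   Context: Undirected model with law $G$ on $[0,\infty)$: in $\mathbb Z^2$, every vertical edge has weight $1$ and every horizontal edge an independent random weight with law $G$; the passage time of a nearest-neighbour path is the sum of its edge weights; $T(u,w)$ is the infimum over all paths from $u$ to $w$, and $\Lambda(v)=\lim_n\frac1nT((0,0),(n,\lceil vn\rceil))$ (a.s. limit, deterministic). Directed model: same weights, but the infimum $T_{dir}(u,w)$ is taken only over directed paths, i.e. paths whose steps are $(1,0)$ or $(0,1)$, and $\Lambda_{dir}(v)=\lim_n\frac1nT_{dir}((0,0),(n,\lceil vn\rceil))$ (a.s. limit, deterministic). *)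

(* Defs.v *)
From HB Require Import structures.
From mathcomp Require Import all_boot all_order all_algebra.
From mathcomp Require Import all_classical all_reals all_analysis.
Set Implicit Arguments. Unset Strict Implicit. Unset Printing Implicit Defensive.
Import Order.TTheory GRing.Theory Num.Theory.
Import numFieldNormedType.Exports.
Local Open Scope classical_set_scope.
Local Open Scope ring_scope.

Definition vtx := (int * int)%type.

(* Horizontal weight configuration: [w x] is the weight of the horizontal
   edge between x = (a,b) and (a+1,b).  Vertical edges have weight 1. *)
Definition config (R : realType) := vtx -> R.

Definition nn (x y : vtx) : bool :=
  ((x.2 == y.2) && ((y.1 == x.1 + 1) || (x.1 == y.1 + 1))) ||
  ((x.1 == y.1) && ((y.2 == x.2 + 1) || (x.2 == y.2 + 1))).

Definition dstep (x y : vtx) : bool :=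
  ((x.2 == y.2) && (y.1 == x.1 + 1)) || ((x.1 == y.1) && (y.2 == x.2 + 1)).

Definition edge_weight (R : realType) (w : config R) (x y : vtx) : R :=
  if x.2 == y.2 then w (Order.min x.1 y.1, x.2) else 1.

Fixpoint path_weight (R : realType) (w : config R) (x : vtx) (s : seq vtx) : R :=
  match s with
  | [::] => 0
  | y :: s' => edge_weight w x y + path_weight w y s'
  end.

Definition T (R : realType) (w : config R) (u z : vtx) : R :=
  inf [set path_weight w u s | s in [set s : seq vtx | path nn u s && (last u s == z)]].

Definition Tdir (R : realType) (w : config R) (u z : vtx) : R :=
  inf [set path_weight w u s | s in [set s : seq vtx | path dstep u s && (last u s == z)]].

Definition target (R : realType) (v : R) (n : nat) : vtx :=
  ((n%:Z)%R, Num.ceil (v * n%:R)).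

Definition mutually_independent (R : realType) (d : measure_display)
  (Omega : measurableType d) (P : probability Omega R) (I : eqType)
  (X : I -> Omega -> R) : Prop :=
  forall (s : seq I) (A : I -> set R), uniq s ->
    (forall i, measurable (A i)) ->
    P (\bigcap_(i in [set` s]) (X i @^-1` A i)) =
    ((\prod_(i <- s) fine (P (X i @^-1` A i)))%R)%:E.

Definition iid_bernoulli_weights (R : realType) (d : measure_display)
  (Omega : measurableType d) (P : probability Omega R) (p : R)
  (X : vtx -> Omega -> R) : Prop :=
  (forall e, measurable_fun setT (X e)) /\
  (forall e, P (X e @^-1` [set 0]) = p%:E) /\
  (forall e, P (X e @^-1` [set 1]) = (1 - p)%:E) /\
  mutually_independent P X.

(* Main.v *)
Require Import Defs.
From HB Require Import structures.
From mathcomp Require Import all_boot all_order all_algebra.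
From mathcomp Require Import all_classical all_reals all_analysis.
Import Order.TTheory GRing.Theory Num.Theory.
Import numFieldNormedType.Exports.
Local Open Scope classical_set_scope.
Local Open Scope ring_scope.
From mathcomp Require Import zify ring lra.

Definition stepd (d : 'I_4) (x : vtx) : vtx :=
  match val d with
  | 0 => (x.1 + 1, x.2)%R
  | 1 => (x.1 - 1, x.2)%R
  | 2 => (x.1, x.2 + 1)%R
  | _ => (x.1, x.2 - 1)%R
  end.

Definition walk (x : vtx) (ds : seq 'I_4) := scanl (fun y d => stepd d y) x ds.

Lemma nn_step (x y : vtx) : nn x y -> exists d : 'I_4, y = stepd d x.
Proof.
case: x y => [a b] [c e]; rewrite /nn /=.
case/orP => /andP [/eqP h /orP [] /eqP h'].
- by exists (@Ordinal 4 0 isT); rewrite /stepd /= h h'.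
- by exists (@Ordinal 4 1 isT); rewrite /stepd /= h h' addrK.
- by exists (@Ordinal 4 2 isT); rewrite /stepd /= h h'.
- by exists (@Ordinal 4 3 isT); rewrite /stepd /= h h' addrK.
Qed.

Lemma path_walk (x : vtx) (t : seq vtx) : path nn x t -> exists ds, walk x ds = t.
Proof.
elim: t x => [|y t IH] x /=; first by exists [::].
case/andP => /nn_step [d ->] /IH [ds <-].
by exists (d :: ds).
Qed.

Definition ekey (a b : vtx) : vtx := (Order.min a.1 b.1, a.2).
Definition horiz (a b : vtx) : bool := a.2 == b.2.

Lemma key_inj (x : vtx) (t : seq vtx) (i j : nat) :
  uniq (x :: t) -> path nn x t -> (i < size t)%N -> (j < size t)%N ->
  horiz (nth x (x::t) i) (nth x t i) -> horiz (nth x (x::t) j) (nth x t j) ->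
  ekey (nth x (x::t) i) (nth x t i) = ekey (nth x (x::t) j) (nth x t j) -> i = j.
Proof.
move=> U /(pathP x) Hp Hi Hj.
have Ni := Hp i Hi; have Nj := Hp j Hj.
have E1 : nth x t i = nth x (x :: t) i.+1 by [].
have E2 : nth x t j = nth x (x :: t) j.+1 by [].
move: Ni Nj; rewrite E1 E2 /horiz /ekey.
have nU := nth_uniq x _ _ U.
move: (nU i j) (nU i j.+1) (nU i.+1 j).
have si : (i < size (x :: t))%N by rewrite /= ltnW.
have sj : (j < size (x :: t))%N by rewrite /= ltnW.
have si1 : (i.+1 < size (x :: t))%N by [].
have sj1 : (j.+1 < size (x :: t))%N by [].
move=> /(_ si sj) e1 /(_ si sj1) e2 /(_ si1 sj) e3.
move: e1 e2 e3.
case: (nth x (x :: t) i) => [a1 a2]; case: (nth x (x :: t) i.+1) => [b1 b2].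
case: (nth x (x :: t) j) => [c1 c2]; case: (nth x (x :: t) j.+1) => [d1 d2].
rewrite /nn /= !xpair_eqE.
move=> e1 e2 e3 N1 N2 H1 H2 [Hm Hr].
case/orP: N1 => /andP[/eqP A1 /orP B1]; last by move/eqP: H1; case: B1 => /eqP; lia.
case/orP: N2 => /andP[/eqP A2 /orP B2]; last by move/eqP: H2; case: B2 => /eqP; lia.
move/eqP: H1 => H1; move/eqP: H2 => H2.
have : (a1 = c1 /\ b1 = d1) \/ (a1 = d1 /\ b1 = c1).
  by case: B1 => /eqP B1; case: B2 => /eqP B2; lia.
case=> [[h1 h2]|[h1 h2]].
  by apply/eqP; rewrite -e1 h1 Hr !eqxx.
have : (i == j.+1) by rewrite -e2 h1 Hr -H2 !eqxx.
have : (i.+1 == j) by rewrite -e3 h2 -H1 Hr !eqxx.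
move=> /eqP <- /eqP; lia.
Qed.
Section Det.
Variables (R : realType) (w : config R).
Hypothesis w0 : forall e, 0 <= w e.

Lemma ew_ge0 a b : 0 <= edge_weight w a b.
Proof. by rewrite /edge_weight; case: ifP. Qed.

Lemma pw_ge0 x s : 0 <= path_weight w x s.
Proof. by elim: s x => [|y s IH] x //=; rewrite addr_ge0 ?ew_ge0. Qed.

Lemma pw_cat x s1 s2 :
  path_weight w x (s1 ++ s2) = path_weight w x s1 + path_weight w (last x s1) s2.
Proof. by elim: s1 x => [|y s IH] x /=; rewrite ?add0r // IH addrA. Qed.

Lemma pw_take x s k : path_weight w x (take k s) <= path_weight w x s.
Proof.
by rewrite -{2}(cat_take_drop k s) pw_cat lerDl pw_ge0.
Qed.

Lemma pw_sum x s : path_weight w x s =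
  \sum_(i < size s) edge_weight w (nth x (x :: s) i) (nth x s i).
Proof.
elim: s x => [|y s IH] x /=; first by rewrite big_ord0.
rewrite big_ord_recl /= IH; congr (_ + _); apply: eq_bigr => i _.
have hi := ltn_ord i.
rewrite add0n (@set_nth_default _ s x y i hi) (@set_nth_default _ (y :: s) x y i) //=.
exact: ltnW.
Qed.

Lemma loop_erase x s : path nn x s -> exists s',
  [/\ path nn x s', last x s' = last x s, uniq (x :: s'),
      {subset s' <= s} & path_weight w x s' <= path_weight w x s].
Proof.
move: {2}(size s) (leqnn (size s)) => n; elim: n x s => [|n IH] x s.
  by rewrite leqn0 => /nilP -> _; exists [::].
move=> Hs Hp; have [xs|xs] := boolP (x \in s).
  case/splitPr: xs Hs Hp => s1 s2.
  rewrite size_cat /= cat_path /=; move=> Hs /and3P[_ _ Hp2].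
  have [|s' [P1 L1 U1 S1 W1]] := IH x s2 _ Hp2; first by move: Hs; lia.
  exists s'; split => //.
  - by rewrite L1 last_cat.
  - by move=> z zs; rewrite mem_cat inE (S1 _ zs) !orbT.
  - rewrite pw_cat /= (le_trans W1) // addrA lerDr addr_ge0 ?pw_ge0 ?ew_ge0 //.
case: s Hs Hp xs => [_ _ _|y s /= Hs /andP[Nxy Hp] xs]; first by exists [::].
have [s' [P1 L1 U1 S1 W1]] := IH y s Hs Hp.
exists (y :: s'); split => //=.
- by rewrite Nxy.
- move: U1 xs; rewrite /= inE => /andP[ys' us'] /norP[xy xs].
  have xs'' : x \notin s' by apply/negP => xs'; move: (S1 _ xs'); rewrite (negbTE xs).
  by rewrite /= !inE negb_or xy xs'' ys' us'.
- move=> z; rewrite !inE => /orP[->//|zs]; by rewrite (S1 _ zs) orbT.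
- by rewrite lerD2l.
Qed.
End Det.

Lemma nn_l1 (x : vtx) s : path nn x s ->
  `|(last x s).1 - x.1| + `|(last x s).2 - x.2| <= (size s)%:Z.
Proof.
elim: s x => [|y s IH] x /=; first by rewrite !subrr.
case/andP => N /IH H.
have : `|y.1 - x.1| + `|y.2 - x.2| <= 1.
  move: N; rewrite /nn; case: x y {H} => [a b] [c e] /=.
  by case/orP => /andP[/eqP h /orP[] /eqP h']; rewrite ?h ?h'; lia.
move: H; lia.
Qed.
Fixpoint rights (x : vtx) (n : nat) : seq vtx :=
  match n with 0 => [::] | n'.+1 => (x.1 + 1, x.2)%R :: rights (x.1 + 1, x.2)%R n' end.
Fixpoint ups (x : vtx) (n : nat) : seq vtx :=
  match n with 0 => [::] | n'.+1 => (x.1, x.2 + 1)%R :: ups (x.1, x.2 + 1)%R n' end.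

Lemma rights_path x n : path dstep x (rights x n).
Proof. by elim: n x => [|n IH] x //=; rewrite IH /dstep /= !eqxx. Qed.
Lemma ups_path x n : path dstep x (ups x n).
Proof. by elim: n x => [|n IH] x //=; rewrite IH /dstep /= !eqxx orbT. Qed.
Lemma rights_last x n : last x (rights x n) = (x.1 + n%:Z, x.2)%R.
Proof.
elim: n x => [|n IH] x /=; first by rewrite addr0; case: x.
by rewrite IH /= -addrA -add1n PoszD.
Qed.
Lemma ups_last x n : last x (ups x n) = (x.1, x.2 + n%:Z)%R.
Proof.
elim: n x => [|n IH] x /=; first by rewrite addr0; case: x.
by rewrite IH /= -addrA -add1n PoszD.
Qed.

Lemma rights_w (R : realType) (w : config R) x n :
  (forall e, w e <= 1) -> path_weight w x (rights x n) <= n%:R.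
Proof.
move=> w1; elim: n x => [|n IH] x //=.
rewrite /edge_weight /= eqxx -add1n natrD lerD //.
Qed.
Lemma ups_w (R : realType) (w : config R) x n :
  path_weight w x (ups x n) = n%:R.
Proof.
elim: n x => [|n IH] x //=.
rewrite /edge_weight /= IH -add1n natrD; congr (_ + _).
have -> : (x.2 == x.2 + 1) = false by apply/negbTE; rewrite eq_sym -subr_eq0 addrAC subrr add0r.
by [].
Qed.

Definition dpath (a b : nat) : seq vtx := rights (0, 0)%R a ++ ups (a%:Z, 0)%R b.

Lemma dpath_path a b : path dstep (0, 0)%R (dpath a b).
Proof. by rewrite cat_path rights_path rights_last /= add0r ups_path. Qed.
Lemma dpath_last a b : last (0, 0)%R (dpath a b) = (a%:Z, b%:Z).
Proof. by rewrite last_cat rights_last /= add0r ups_last /= add0r. Qed.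

Lemma dstep_nn x y : dstep x y -> nn x y.
Proof. by rewrite /dstep /nn => /orP[/andP[-> ->]|/andP[-> ->]]; rewrite ?orbT. Qed.

Lemma path_dstep_nn x s : path dstep x s -> path nn x s.
Proof. by apply: sub_path => a b /dstep_nn. Qed.

Section TLem.
Variables (R : realType) (w : config R).
Hypothesis w0 : forall e, 0 <= w e.
Hypothesis w1 : forall e, w e <= 1.

Lemma dpath_w a b : path_weight w (0, 0)%R (dpath a b) <= (a + b)%:R.
Proof.
rewrite pw_cat rights_last /= add0r ups_w natrD lerD2r rights_w //.
Qed.

Lemma T_ge0 u z : 0 <= T w u z.
Proof.
rewrite /T; have [S0|] := pselect ([set path_weight w u s | s in [set s : seq vtx | path nn u s && (last u s == z)]] !=set0).
  by apply: lb_le_inf => // y [s _ <-]; apply: pw_ge0.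
move=> H; rewrite inf_out // => -[y _]; apply: H.
by case: y => [] y Hy; exists y.
Qed.

Lemma Tdir_le a b : Tdir w (0, 0)%R (a%:Z, b%:Z) <= (a + b)%:R.
Proof.
rewrite /Tdir; apply: le_trans (dpath_w a b).
have Hin : [set path_weight w (0, 0)%R s | s in [set s : seq vtx | path dstep (0, 0)%R s && (last (0, 0)%R s == (a%:Z, b%:Z))]] (path_weight w (0, 0)%R (dpath a b)).
  by exists (dpath a b) => //; rewrite /= dpath_path dpath_last eqxx.
apply: (ge_inf _ Hin); exists 0 => y [s _ <-]; exact: pw_ge0.
Qed.

Lemma T_le_Tdir u z : (exists s, path dstep u s && (last u s == z)) -> T w u z <= Tdir w u z.
Proof.
move=> [s0 Hs0]; rewrite /T /Tdir; apply: lb_le_inf.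
  by exists (path_weight w u s0), s0.
move=> y [s /andP[Hp Hl] <-]; apply: ge_inf.
  by exists 0 => y' [s' _ <-]; exact: pw_ge0.
by exists s => //; rewrite /= (path_dstep_nn _ _ Hp) Hl.
Qed.
End TLem.
Definition o : vtx := (0, 0).

Lemma bad_path (R : realType) (w : config R) (q a b : nat) :
  (forall e, w e = 0 \/ w e = 1) -> (0 < q)%N ->
  T w o (a%:Z, b%:Z) < (1 - q%:R^-1) * (a + b)%:R ->
  exists (ds : (a + b).-tuple 'I_4) (S : {set 'I_(a + b)}),
    [/\ uniq (o :: walk o ds), path nn o (walk o ds), (a + b < q * #|S|)%N &
        forall i : 'I_(a + b), i \in S ->
          horiz (nth o (o :: walk o ds) i) (nth o (walk o ds) i) &&
          (w (ekey (nth o (o :: walk o ds) i) (nth o (walk o ds) i)) == 0)].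
Proof.
move=> w01 q0 HT.
have w0 : forall e, 0 <= w e by move=> e; case: (w01 e) => ->.
have w1 : forall e, w e <= 1 by move=> e; case: (w01 e) => ->.
set K := (a + b)%N in HT *.
have [y [s /andP[Hp /eqP Hl] <-] Hy] := inf_lt (ex_intro _ (path_weight w o (dpath a b))
   (ex_intro2 _ _ (dpath a b) (introT andP (conj (path_dstep_nn _ _ (dpath_path a b)) (introT eqP (dpath_last a b)))) erefl)) HT.
have [s' [P1 L1 U1 _ W1]] := @loop_erase R w w0 o s Hp.
have Ks : (K <= size s')%N.
  have := nn_l1 _ _ P1; rewrite L1 Hl /= !subr0.
  rewrite /K; lia.
set t := take K s'.
have Pt : path nn o t by move: P1; rewrite -(cat_take_drop K s') cat_path => /andP[].
have Ut : uniq (o :: t) by have := take_uniq K.+1 U1.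
have St : size t = K by rewrite size_take; case: ltngtP Ks.
have Wt : path_weight w o t < (1 - q%:R^-1) * K%:R.
  by rewrite (le_lt_trans (@pw_take R w w0 _ _ _)) // (le_lt_trans W1).
have [ds Hds] := path_walk _ _ Pt.
have sds : size ds == K by rewrite -St -Hds size_scanl.
exists (Tuple sds).
set u := fun i : nat => nth o (o :: t) i.
set u' := fun i : nat => nth o t i.
exists [set i : 'I_K | horiz (u i) (u' i) && (w (ekey (u i) (u' i)) == 0)]%SET.
rewrite /= Hds; split => //; last by move=> i; rewrite inE.
set S := [set i : 'I_K | _]%SET.
have ew : forall i : 'I_K, edge_weight w (u i) (u' i) = 1 - (if i \in S then 1 else 0).
  move=> i; rewrite inE /edge_weight /horiz; case: ifP => h /=.
    by case: (w01 (ekey (u i) (u' i))) => ->; rewrite ?eqxx ?subrr ?subr0 //= oner_eq0 subr0.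
  by rewrite subr0.
have pwE : path_weight w o t = K%:R - #|S|%:R.
  rewrite pw_sum.
  have -> : \sum_(i < size t) edge_weight w (nth o (o :: t) i) (nth o t i) =
            \sum_(0 <= i < size t) edge_weight w (nth o (o :: t) i) (nth o t i) by rewrite big_mkord.
  rewrite St big_mkord (eq_bigr _ (fun i _ => ew i)) sumrB -big_mkcond /= !sumr_const card_ord.
  by [].
move: Wt; rewrite pwE => Wt.
have q0' : 0 < q%:R :> R by rewrite ltr0n.
have : (K%:R : R) < q%:R * #|S|%:R.
  have : q%:R^-1 * K%:R < #|S|%:R :> R by move: Wt; rewrite mulrBl mul1r; lra.
  by rewrite -(ltr_pM2l q0') mulrA mulfV ?gt_eqF // mul1r.
by rewrite -natrM ltr_nat.
Qed.
Section Prob.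
Variables (R : realType) (d : measure_display) (Omega : measurableType d)
  (P : probability Omega R).

Lemma boole_seq (I : Type) (r : seq I) (F : I -> set Omega) (c : R) :
  (forall i, measurable (F i)) -> (forall i, (P (F i) <= c%:E)%E) ->
  (P (\big[setU/set0]_(i <- r) F i) <= (c *+ size r)%:E)%E.
Proof.
move=> mF PF; elim: r => [|i r IH]; first by rewrite big_nil measure0.
rewrite big_cons /= (le_trans (measureU2 _ (mF i) (bigsetU_measurable _ (fun j _ => mF j)))) //.
by rewrite mulrS EFinD leeD //; exact: PF.
Qed.

Lemma preim_meas (X : Omega -> R) (A : set R) :
  measurable_fun setT X -> measurable A -> measurable (X @^-1` A).
Proof. by move=> mX mA; rewrite -[X @^-1` A]setTI; apply: mX. Qed.

Variables (p : R) (X : vtx -> Omega -> R).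
Hypothesis HX : iid_bernoulli_weights P p X.

Lemma ae01 : P.-negligible (~` [set om | forall e, X e om = 0 \/ X e om = 1]).
Proof.
case: HX => mX [H0 [H1 _]].
pose bad e := ~` (X e @^-1` [set 0] `|` X e @^-1` [set 1]).
have nb : forall e, P.-negligible (bad e).
  move=> e; exists (bad e); split => //.
    by apply: measurableC; apply: measurableU; apply: preim_meas.
  rewrite probability_setC; last by apply: measurableU; apply: preim_meas.
  rewrite measureU ?H0 ?H1; try by apply: preim_meas.
    transitivity (1 - (p%:E + (1 - p)%:E))%E; first by congr (_ - (_ + _))%E; [exact: H0 | exact: H1].
    by rewrite -EFinD addrC subrK subrr.
  rewrite -subset0 => x [/= h0 h1].
  by move: h1; rewrite h0 => /esym /eqP; rewrite oner_eq0.
pose F k := if unpickle k is Some e then bad e else set0.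
have : P.-negligible (\bigcup_k F k).
  apply: negligible_bigcup => k; rewrite /F; case: (unpickle k) => // .
  by exists set0; split.
case=> A [mA PA sA]; exists A; split => // om /= Hom; apply: sA.
have [e He] : exists e, ~ (X e om = 0 \/ X e om = 1).
  by apply: contrapT => H; apply: Hom => e; apply: contrapT => H'; apply: H; exists e.
exists (pickle e) => //; rewrite /F pickleK /bad /=.
by move=> [|]; move=> h; apply: He; [left|right].
Qed.
End Prob.
Definition keys (K : nat) (ds : K.-tuple 'I_4) (S : {set 'I_K}) : seq vtx :=
  [seq ekey (nth o (o :: walk o ds) i) (nth o (walk o ds) i) | i : 'I_K <- enum S].

Definition cond (q K : nat) (ds : K.-tuple 'I_4) (S : {set 'I_K}) : bool :=
  [&& uniq (o :: walk o ds), path nn o (walk o ds), (K < q * #|S|)%N &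
      [forall i in S, horiz (nth o (o :: walk o ds) i) (nth o (walk o ds) i)]].

Arguments keys {K}.
Arguments cond q {K}.

Lemma keys_uniq q K ds S : @cond q K ds S -> uniq (keys ds S).
Proof.
case/and4P => U Pa _ /forall_inP Hh.
rewrite /keys map_inj_in_uniq ?enum_uniq // => i j; rewrite !mem_enum => iS jS Hk.
have sz : size (walk o ds) = K by rewrite size_scanl size_tuple.
apply: val_inj; apply: (key_inj _ _ _ _ U Pa); rewrite ?sz ?ltn_ord //; by [apply: Hh | apply: Hh].
Qed.

Section Prob2.
Variables (R : realType) (d : measure_display) (Omega : measurableType d)
  (P : probability Omega R).
Variables (p : R) (X : vtx -> Omega -> R) (q : nat).
Hypothesis HX : iid_bernoulli_weights P p X.
Hypothesis p0 : 0 <= p.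
Hypothesis pq : p <= (16^-1) ^+ q.

Definition Ev {K : nat} (ds : K.-tuple 'I_4) (S : {set 'I_K}) : set Omega :=
  if cond q ds S then \bigcap_(e in [set` keys ds S]) (X e @^-1` [set 0]) else set0.

Definition Bset K : set Omega :=
  \big[setU/set0]_(i <- enum {: K.-tuple 'I_4 * {set 'I_K}}) Ev i.1 i.2.

Lemma Ev_meas K ds S : measurable (@Ev K ds S).
Proof.
rewrite /Ev; case: ifP => // _; apply: fin_bigcap_measurable; first exact: finite_seq.
by move=> e _; apply: preim_meas => //; case: HX => mX _; apply: mX.
Qed.

Lemma Bset_meas K : measurable (Bset K).
Proof. by apply: bigsetU_measurable => i _; apply: Ev_meas. Qed.

Lemma P_Ev K ds S : (P (@Ev K ds S) <= ((16^-1) ^+ K)%:E)%E.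
Proof.
rewrite /Ev; case: ifP => C; last by rewrite measure0 lee_fin exprn_ge0 // invr_ge0.
case: HX => mX [H0 [_ Hind]].
rewrite (Hind _ (fun _ => [set 0]) (@keys_uniq q K ds S C)); last by move=> _; apply: measurable_set1.
rewrite lee_fin.
have -> : \prod_(i <- keys ds S) fine (P (X i @^-1` [set 0])) = p ^+ #|S|.
  rewrite (eq_bigr (fun _ => p)); last by move=> i _; rewrite H0.
  by rewrite /keys big_map big_enum /= prodr_const.
have h16 : 0 <= 16^-1 :> R by rewrite invr_ge0.
have h16' : 16^-1 <= 1 :> R by rewrite invf_le1 // ler1n.
apply: le_trans (_ : ((16^-1) ^+ q) ^+ #|S| <= _).
  by rewrite lerXn2r // ?nnegrE // exprn_ge0.
rewrite -exprM; apply: ler_wiXn2l => //.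
by case/and4P: C => _ _ /ltnW.
Qed.
End Prob2.
Arguments Ev_meas {R d Omega P p X q} HX {K}.
Arguments P_Ev {R d Omega P p X q} HX p0 pq {K}.
Arguments Bset_meas {R d Omega P p X q} HX K.
Section Prob3.
Variables (R : realType) (d : measure_display) (Omega : measurableType d)
  (P : probability Omega R).
Variables (p : R) (X : vtx -> Omega -> R) (q : nat).
Hypothesis HX : iid_bernoulli_weights P p X.
Hypothesis p0 : 0 <= p.
Hypothesis pq : p <= (16^-1) ^+ q.

Lemma P_B K : (P (@Bset _ _ _ X q K) <= ((2^-1) ^+ K)%:E)%E.
Proof.
rewrite /Bset; apply: le_trans.
  apply: (@boole_seq _ _ _ P _ _ _ ((16^-1) ^+ K)) => i; first exact: (Ev_meas HX).
  exact: (P_Ev HX p0 pq).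
rewrite lee_fin -cardE card_prod card_tuple card_ord.
rewrite -cardsT -powersetT card_powerset cardsT card_ord.
rewrite -[_ *+ (_ * _)]mulr_natr natrM !natrX -exprMn -exprMn.
have -> : (16^-1 * (4 * 2) : R) = 2^-1 by field.
by [].
Qed.
End Prob3.
Arguments Bset {R d Omega}.
Arguments P_B {R d Omega P p X q} HX p0 pq K.
Arguments bad_path {R w q a b}.
Arguments ae01 {R d Omega P p X}.
Lemma target_nat (R : realType) (v : R) (n : nat) : 0 <= v ->
  target v n = (n%:Z, (`|Num.ceil (v * n%:R)|%N)%:Z).
Proof.
move=> v0; rewrite /target gez0_abs // ceil_ge0.
by apply: (@lt_le_trans _ _ 0) => //; rewrite mulr_ge0.
Qed.

Lemma lower (R : realType) (d : measure_display) (Omega : measurableType d)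
  (P : probability Omega R) (p : R) (X : vtx -> Omega -> R) (q : nat) (v L : R) :
  iid_bernoulli_weights P p X -> 0 <= p -> p <= (16^-1) ^+ q -> (0 < q)%N -> 0 <= v ->
  {ae P, forall om, (fun n : nat => T (fun e => X e om) (0, 0) (target v n) / n%:R)
                         @ \oo --> L} ->
  (1 - q%:R^-1) * (v + 1) <= L.
Proof.
move=> HX p0 pq q0 v0 Hae.
rewrite leNgt; apply/negP => HL.
set c := (1 - q%:R^-1) * (v + 1) in HL.
pose bn n := `|Num.ceil (v * n%:R)|%N.
pose Kn n := (n + bn n)%N.
pose C k := \bigcap_(n in [set n | (k < n)%N]) Bset X q (Kn n).
have mC : forall k, measurable (C k).
  move=> k; apply: bigcap_measurable; first by exists k.+1 => /=.
  by move=> n _; exact: (Bset_meas HX).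
have mU : measurable (\bigcup_k C k) by apply: bigcupT_measurable.
have homo : {homo C : n m / (n <= m)%N >-> (n <= m)%O}.
  move=> n m nm; rewrite subsetEset => om Hom j /= mj; apply: Hom => /=.
  exact: leq_ltn_trans mj.
have cv := @nondecreasing_cvg_mu _ _ _ P _ mC mU homo.
have PC : forall k, (P (C k) <= (2^-1)%:E)%E.
  move=> k; apply: (@le_trans _ _ (P (Bset X q (Kn k.+1)))).
    apply: le_measure; rewrite ?inE //; first exact: (Bset_meas HX).
    by move=> om Hom; apply: Hom => /=.
  apply: le_trans (P_B HX p0 pq _) _; rewrite lee_fin.
  have h2 : 0 <= 2^-1 :> R by rewrite invr_ge0.
  have h2' : 2^-1 <= 1 :> R by rewrite invf_le1 // ler1n.
  by rewrite -{2}(expr1 (2^-1)); apply: ler_wiXn2l.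
have Hlim : (P (\bigcup_k C k) <= (2^-1)%:E)%E.
  rewrite -(cvg_lim _ cv) //; apply: lime_le; first exact: (cvgP _ cv).
  by apply: nearW => k; apply: PC.
case: Hae => N [mN PN sN].
case: (ae01 HX) => Z [mZ PZ sZ].
have sub : setT `<=` (N `|` Z) `|` \bigcup_k C k.
  move=> om _.
  case: (pselect (N om)) => HN; first by left; left.
  case: (pselect (Z om)) => HZ; first by left; right.
  right.
  have Hc : (fun n : nat => T (fun e => X e om) (0, 0) (target v n) / n%:R) @ \oo --> L.
    by apply: contrapT => H; apply: HN; apply: sN.
  have w01 : forall e, X e om = 0 \/ X e om = 1.
    by apply: contrapT => H; apply: HZ; apply: sZ.
  have [k _ Hk] := cvgr_lt _ Hc _ HL.
  exists k => // n /= kn.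
  have {}Hk := Hk n (ltnW kn).
  have n0 : (0 < n)%N by apply: leq_ltn_trans kn.
  have n0' : 0 < n%:R :> R by rewrite ltr0n.
  move: Hk; rewrite /= ltr_pdivrMr // target_nat // => Hk.
  have HT : T (fun e => X e om) o (n%:Z, (bn n)%:Z) < (1 - q%:R^-1) * (n + bn n)%:R.
    apply: (lt_le_trans Hk); rewrite /c -mulrA ler_wpM2l //.
      by rewrite subr_ge0 invf_le1 ?ler1n ?ltr0n.
    rewrite mulrDl mul1r natrD addrC lerD2l.
    rewrite /bn -[X in _ <= X]/(((`|Num.ceil (v * n%:R)|%N)%:Z)%:~R) gez0_abs.
      by rewrite ceil_ge.
    by rewrite ceil_ge0; apply: (@lt_le_trans _ _ 0) => //; rewrite mulr_ge0.
  have [ds [S [U Pa KS HS]]] := bad_path w01 q0 HT.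
  rewrite /Bset -bigcup_seq; exists (ds, S); first by rewrite /= mem_enum.
  rewrite /Ev /= ifT; last first.
    rewrite /cond U Pa KS /=; apply/forall_inP => i /HS /andP[] //.
  move=> e /= /mapP [i iS ->]; rewrite mem_enum in iS.
  by case/andP: (HS i iS) => _ /eqP.
have : (1 <= P (\bigcup_k C k))%E.
  rewrite -(probability_setT P).
  apply: (le_trans (le_measure _ _ _ sub)); rewrite ?inE //.
    by apply: measurableU => //; apply: measurableU.
  apply: (le_trans (measureU2 _ _ _)) => //; first by apply: measurableU.
  apply: (le_trans (leeD (measureU2 _ mN mZ) (lexx _))).
  apply: (@le_trans _ _ (0 + 0 + P (\bigcup_k C k))%E); last by rewrite !add0e.
  apply: leeD => //; apply: leeD; rewrite measure_le0; apply/eqP; [exact: PN | exact: PZ].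
move/le_trans/(_ Hlim); rewrite lee_fin; lra.
Qed.
Lemma upper (R : realType) (d : measure_display) (Omega : measurableType d)
  (P : probability Omega R) (p : R) (X : vtx -> Omega -> R) (v L Ld : R) :
  iid_bernoulli_weights P p X -> 0 <= v ->
  {ae P, forall om, (fun n : nat => T (fun e => X e om) (0, 0) (target v n) / n%:R)
                         @ \oo --> L} ->
  {ae P, forall om, (fun n : nat => Tdir (fun e => X e om) (0, 0) (target v n) / n%:R)
                         @ \oo --> Ld} ->
  L <= Ld /\ Ld <= v + 1.
Proof.
move=> HX v0 [N1 [mN1 PN1 sN1]] [N2 [mN2 PN2 sN2]].
case: (ae01 HX) => Z [mZ PZ sZ].
have [om Hom] : exists om, ~ ((N1 `|` N2 `|` Z) om).
  apply: contrapT => H.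
  have : (P setT <= P (N1 `|` N2 `|` Z))%E.
    apply: le_measure; rewrite ?inE //; first by do 2 apply: measurableU => //.
    by move=> x _; apply: contrapT => Hx; apply: H; exists x.
  rewrite probability_setT => H1.
  have : (P (N1 `|` N2 `|` Z) <= 0)%E.
    apply: (le_trans (measureU2 _ _ mZ)); first exact: measurableU.
    apply: (le_trans (leeD (measureU2 _ mN1 mN2) (lexx _))).
    apply: (@le_trans _ _ (0 + 0 + 0)%E); last by rewrite !adde0.
    apply: leeD; [apply: leeD|];
      rewrite measure_le0; apply/eqP; [exact: PN1 | exact: PN2 | exact: PZ].
  move/(le_trans H1); rewrite lee_fin; lra.
have Hc1 : (fun n : nat => T (fun e => X e om) (0, 0) (target v n) / n%:R) @ \oo --> L.
  by apply: contrapT => H; apply: Hom; left; left; apply: sN1.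
have Hc2 : (fun n : nat => Tdir (fun e => X e om) (0, 0) (target v n) / n%:R) @ \oo --> Ld.
  by apply: contrapT => H; apply: Hom; left; right; apply: sN2.
have w01 : forall e, X e om = 0 \/ X e om = 1.
  by apply: contrapT => H; apply: Hom; right; apply: sZ.
set w := fun e => X e om.
have w0 : forall e, 0 <= w e by move=> e; rewrite /w; case: (w01 e) => ->.
have w1 : forall e, w e <= 1 by move=> e; rewrite /w; case: (w01 e) => ->.
pose bn n := `|Num.ceil (v * n%:R)|%N.
have bnE : forall n : nat, (bn n)%:R <= v * n%:R + 1.
  move=> n; rewrite /bn -[X in X <= _]/(((`|Num.ceil (v * n%:R)|%N)%:Z)%:~R) gez0_abs.
    by have := ceilB1_lt (v * n%:R); rewrite intrB /=; lra.
  by rewrite ceil_ge0; apply: (@lt_le_trans _ _ 0) => //; rewrite mulr_ge0.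
have Tdn : forall n : nat, Tdir w (0, 0) (target v n) <= (n + bn n)%:R.
  by move=> n; rewrite target_nat //; apply: Tdir_le.
split.
  apply: (ler_cvg_to Hc1 Hc2); apply: nearW => n.
  apply: ler_wpM2r; first by rewrite invr_ge0.
  rewrite target_nat //; apply: T_le_Tdir => //.
  by exists (dpath n (bn n)); rewrite dpath_path dpath_last eqxx.
rewrite leNgt; apply/negP => HL.
set del := (Ld - (v + 1)) / 2.
have del0 : 0 < del by rewrite /del divr_gt0 // subr_gt0.
have hz : v + 1 + del < Ld by rewrite /del; lra.
have [k _ Hk] := cvgr_gt _ Hc2 (v + 1 + del) hz.
set n := (k + `|Num.ceil del^-1|%N).+1.
have kn : (k <= n)%N by rewrite /n; lia.
have {Hk} := Hk n kn.
have n0 : 0 < n%:R :> R by rewrite ltr0n.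
rewrite /= ltr_pdivlMr //.
have hn : del^-1 < n%:R.
  rewrite /n -addn1 natrD; apply: (@le_lt_trans _ _ (`|Num.ceil del^-1|%N)%:R).
    rewrite -[X in _ <= X]/(((`|Num.ceil del^-1|%N)%:Z)%:~R) gez0_abs ?ceil_ge //.
    by rewrite ceil_ge0; apply: (@lt_le_trans _ _ 0) => //; rewrite invr_ge0 ltW.
  rewrite -natrD ltr_nat; lia.
have hn' : 1 < del * n%:R.
  have di : 0 < del^-1 by rewrite invr_gt0.
  by rewrite -(ltr_pM2l di) mulr1 mulrA mulVf ?gt_eqF // mul1r.
have := Tdn n; rewrite natrD => h1 h2.
have := bnE n; move: h1 h2 hn'; lra.
Qed.
Lemma pick_q (R : realType) (a eps : R) : 0 < eps -> 0 <= a ->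
  exists q : nat, (0 < q)%N /\ a * q%:R^-1 <= eps.
Proof.
move=> e0 a0; exists (`|Num.ceil (a / eps)|%N).+1; split => //.
set q := (`|Num.ceil (a / eps)|%N).+1.
have q0 : 0 < q%:R :> R by rewrite ltr0n.
rewrite ler_pdivrMr //.
have : a / eps <= q%:R.
  rewrite /q -addn1 natrD; apply: (@le_trans _ _ (`|Num.ceil (a / eps)|%N)%:R).
    rewrite -[X in _ <= X]/(((`|Num.ceil (a / eps)|%N)%:Z)%:~R) gez0_abs ?ceil_ge //.
    by rewrite ceil_ge0; apply: (@lt_le_trans _ _ 0) => //; rewrite divr_ge0 // ltW.
  by rewrite lerDl.
by rewrite ler_pdivrMr // mulrC.
Qed.

Arguments pick_q {R a eps}.

Lemma conv_aux (R : realType) (f : R -> R) (a : R) : 0 <= a ->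
  (forall (q : nat) p, (0 < q)%N -> 0 < p -> p <= (16^-1) ^+ q ->
     (1 - q%:R^-1) * a <= f p /\ f p <= a) ->
  f p @[p --> 0^'+] --> a.
Proof.
move=> a0 H; apply/cvgrPdist_le => eps e0.
have [q [q0 hq]] := pick_q e0 a0.
have d0 : 0 < (16^-1) ^+ q :> R by rewrite exprn_gt0 // invr_gt0.
near=> p.
have p0 : 0 < p by near: p; exact: nbhs_right_gt.
have pd : p <= (16^-1) ^+ q by near: p; exact: nbhs_right_ltW.
have [h1 h2] := H q p q0 p0 pd.
rewrite ger0_norm ?subr_ge0 //.
move: h1; rewrite mulrBl mul1r mulrC => h1.
lra.
Unshelve. all: by end_near.
Qed.

Arguments upper {R d Omega P p X v L Ld}.
Arguments lower {R d Omega P p X q v L}.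

Theorem lemma3p5 (R : realType) (d : measure_display) (Omega : measurableType d)
  (P : probability Omega R) (X : R -> vtx -> Omega -> R)
  (Lam Lamdir : R -> R -> R) :
  (forall p, 0 <= p <= 1 -> iid_bernoulli_weights P p (X p)) ->
  (forall p v, 0 <= p <= 1 -> 0 <= v ->
     {ae P, forall om, (fun n : nat => T (fun e => X p e om) (0, 0) (target v n) / n%:R)
                         @ \oo --> Lam p v}) ->
  (forall p v, 0 <= p <= 1 -> 0 <= v ->
     {ae P, forall om, (fun n : nat => Tdir (fun e => X p e om) (0, 0) (target v n) / n%:R)
                         @ \oo --> Lamdir p v}) ->
  forall v : R, 0 <= v ->
    [/\ Lam 0 v = v + 1,
        Lam p v @[p --> 0^'+] --> v + 1 &
        Lamdir p v @[p --> 0^'+] --> v + 1].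
Proof.
move=> HX HT HTd v v0.
have up : forall p, 0 <= p <= 1 -> Lam p v <= Lamdir p v /\ Lamdir p v <= v + 1.
  by move=> p hp; apply: (upper (HX p hp) v0 (HT p v hp v0) (HTd p v hp v0)).
have lo : forall (q : nat) p, (0 < q)%N -> 0 <= p -> p <= (16^-1) ^+ q ->
    (1 - q%:R^-1) * (v + 1) <= Lam p v.
  move=> q p q0 p0 pq.
  have hp : 0 <= p <= 1.
    rewrite p0 /=; apply: (le_trans pq); apply: exprn_ile1; rewrite ?invr_ge0 //.
    by rewrite invf_le1 // ler1n.
  exact: (lower (HX p hp) p0 pq q0 v0 (HT p v hp v0)).
have v1 : 0 <= v + 1 by rewrite addr_ge0.
split.
- have h01 : 0 <= (0 : R) <= 1 by rewrite lexx ler01.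
  apply/eqP; rewrite eq_le; apply/andP; split.
    by have [h1 h2] := up 0 h01; apply: le_trans h2.
  rewrite leNgt; apply/negP => HL.
  have e0 : 0 < (v + 1 - Lam 0 v) / 2 by rewrite divr_gt0 // subr_gt0.
  have [q [q0 hq]] := pick_q e0 v1.
  have hd : 0 <= (16^-1 : R) ^+ q by rewrite exprn_ge0 // invr_ge0.
  have := lo q 0 q0 (lexx 0) hd.
  rewrite mulrBl mul1r mulrC; move: hq HL; lra.
- apply: conv_aux => // q p q0 p0 pq.
  split; first exact: lo (ltW p0) pq.
  have hp : 0 <= p <= 1.
    rewrite (ltW p0) /=; apply: (le_trans pq); apply: exprn_ile1; rewrite ?invr_ge0 //.
    by rewrite invf_le1 // ler1n.
  by have [h1 h2] := up p hp; apply: le_trans h2.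
- apply: conv_aux => // q p q0 p0 pq.
  have hp : 0 <= p <= 1.
    rewrite (ltW p0) /=; apply: (le_trans pq); apply: exprn_ile1; rewrite ?invr_ge0 //.
    by rewrite invf_le1 // ler1n.
  have [h1 h2] := up p hp.
  split => //; apply: le_trans h1; exact: lo (ltW p0) pq.
Qed.
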